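(* If $G=(V,E)$ is not observable and $|V|\ge 2$, then for any player algorithm (for the online learning problem with feedback graph $G$) there exists a sequence of loss functions $\ell_1,\ell_2,\dots:V\to[0,1]$ such that the player's expected regret after $T$ rounds is at least $\tfrac14 T$.
   Context: Let $G=(V,E)$ be a directed graph (self-loops allowed), $N^{\mathrm{in}}(i)=\{j:(j,i)\in E\}$, $N^{\mathrm{out}}(i)=\{j:(i,j)\in E\}$. $G$ is observable if $N^{\mathrm{in}}(i)\neq\emptyset$ for every $i\in V$. Online learning with feedback graph $G$: the environment fixes in advance losses $\ell_t:V\to[0,1]$; on round $t$ the player (possibly randomly) chooses $I_t\in V$ based on past observations, incurs $\ell_t(I_t)$, and observes only $\{(j,\ell_t(j)):j\in N^{\mathrm{out}}(I_t)\}$. The expected regret after $T$ rounds is $\mathbb{E}[\sum_{t=1}^T\ell_t(I_t)]-\min_{i\in V}\sum_{t=1}^T\ell_t(i)$. *)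

(* Defs.v *)
From mathcomp Require Import all_boot all_order all_algebra.
Set Implicit Arguments. Unset Strict Implicit. Unset Printing Implicit Defensive.
Import Order.TTheory GRing.Theory Num.Theory.
Local Open Scope ring_scope.

(* A directed graph G = (V, E) with self-loops allowed: V a finite type,
   E : rel V, (j, i) \in E  iff  E j i. *)

Definition observable (V : finType) (E : rel V) : Prop :=
  forall i : V, exists j : V, E j i.

Definition loss_seq (R : realFieldType) (V : finType) := nat -> V -> R.

Definition valid_losses (R : realFieldType) (V : finType) (l : loss_seq R V) :=
  forall t v, 0 <= l t v <= 1.

(* What the player sees after a round: its own action I_t together with the
   feedback {(j, l_t(j)) : j \in N_out(I_t)}, encoded as a partial function
   (Some (l_t j) if (I_t, j) \in E, None otherwise). *)
Definition obs (R : realFieldType) (V : finType) := (V * (V -> option R))%type.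

Definition feedback (R : realFieldType) (V : finType) (E : rel V)
  (l : loss_seq R V) (t : nat) (v : V) : V -> option R :=
  fun j => if E v j then Some (l t j) else None.

(* A (randomized) player algorithm: given the history of past observations,
   a probability distribution over V for the next action. *)
Definition player (R : realFieldType) (V : finType) :=
  seq (obs R V) -> V -> R.

Definition valid_player (R : realFieldType) (V : finType) (p : player R V) :=
  (forall h v, 0 <= p h v) /\ (forall h, \sum_(v : V) p h v = 1).

Fixpoint exp_loss (R : realFieldType) (V : finType) (E : rel V)
  (p : player R V) (l : loss_seq R V) (n : nat) (h : seq (obs R V)) : R :=
  match n with
  | 0 => 0
  | n'.+1 =>
      \sum_(v : V) p h v *
        (l (size h).+1 v
         + exp_loss E p l n' (rcons h (v, feedback E l (size h).+1 v)))
  end.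

Definition cum_loss (R : realFieldType) (V : finType) (l : loss_seq R V)
  (T : nat) (i : V) : R := \sum_(1 <= t < T.+1) l t i.

(* min_{i in V} cum_loss l T i.  The seed T%:R is harmless for losses in
   [0,1] on a nonempty V, since then every cum_loss is <= T. *)
Definition best_loss (R : realFieldType) (V : finType) (l : loss_seq R V)
  (T : nat) : R := \big[Num.min/T%:R]_(i : V) cum_loss l T i.

Definition regret (R : realFieldType) (V : finType) (E : rel V)
  (p : player R V) (l : loss_seq R V) (T : nat) : R :=
  exp_loss E p l T [::] - best_loss l T.

(* Main.v *)
Require Import Defs.
From mathcomp Require Import all_boot all_order all_algebra.
From mathcomp Require Import ring lra.
From Stdlib Require Import Classical FunctionalExtensionality.
Import Order.TTheory GRing.Theory Num.Theory.
Local Open Scope ring_scope.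

Lemma best_le (R : realFieldType) (V : finType) (l : loss_seq R V) T j :
  best_loss l T <= cum_loss l T j.
Proof.
rewrite /best_loss (bigD1 j) //=; by rewrite ge_min lexx.
Qed.

Theorem theorem6 (R : realFieldType) (V : finType) (E : rel V) :
  ~ observable E -> (2 <= #|V|)%N ->
  forall p : player R V, valid_player p ->
  forall T : nat,
  exists l : loss_seq R V, valid_losses l /\
    T%:R / 4 <= regret E p l T.
Proof.
move=> nobs cardV p [p0 p1] T.
have [i Hi] : exists i : V, forall j, E j i = false.
  apply: NNPP => H; apply: nobs => i; apply: NNPP => H2; apply: H.
  exists i => j; apply/negbTE/negP => Eji; apply: H2; by exists j.
have [k Hk] : exists k : V, k != i.
  have : (0 < #|predC1 i|)%N by rewrite cardC1; case: #|V| cardV => [|[]].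
  by case/card_gt0P => k Hk; exists k.
pose la (a : R) : loss_seq R V := fun t v => if v == i then a else 1/2.
have fbE t v : feedback E (la 0) t v = feedback E (la 1) t v.
  apply: functional_extensionality => j; rewrite /feedback /la.
  case: ifP => // Evj; case: eqP => // ji; by rewrite ji Hi in Evj.
have sumE : forall n h, exp_loss E p (la 0) n h + exp_loss E p (la 1) n h = n%:R.
  elim=> [|n IH] h /=; first by rewrite addr0.
  rewrite -big_split /=.
  rewrite (eq_bigr (fun v => p h v * (1 + n%:R))); last first.
    move=> v _; rewrite fbE -mulrDr addrACA IH.
    have -> : la 0 (size h).+1 v + la 1 (size h).+1 v = 1.
      by rewrite /la; case: ifP => _; rewrite ?add0r //; field.
    by [].
  by rewrite -mulr_suml p1 mul1r -addn1 natrD addrC.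
have c0 : cum_loss (la 0) T i = 0.
  by rewrite /cum_loss big1 // => t _; rewrite /la eqxx.
have c1 : cum_loss (la 1) T k = T%:R / 2.
  rewrite /cum_loss /la (negbTE Hk) sumr_const_nat subn1 /= mulr_natl.
  by rewrite mul1r.
have b0 := @best_le R V (la 0) T i; have b1 := @best_le R V (la 1) T k.
rewrite c0 in b0; rewrite c1 in b1.
have hs := sumE T [::].
have v0 : forall a : R, 0 <= a <= 1 -> valid_losses (la a).
  move=> a Ha t v; rewrite /la; case: ifP => // _.
  apply/andP; split; first by rewrite divr_ge0.
  by rewrite ler_pdivrMr // mul1r ler1n.
case: (lerP (T%:R / 4) (regret E p (la 0) T)) => H.
  by exists (la 0); split => //; apply: v0; rewrite lexx ler01.
exists (la 1); split; first by apply: v0; rewrite ler01 lexx.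
rewrite /regret in H *.
have eT : T%:R = exp_loss E p (la 0) T [::] + exp_loss E p (la 1) T [::] by rewrite hs.
lra.
Qed.
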